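(* Let $G$ be a connected graph with node set $V$, $n=|V|$, and let $r$ be a ranking of $V$. Let $f$ be a function such that $f(v,\ell)$ can be evaluated for any $v\in V$ and $\ell\le e(v)$. If $f(v,\cdot)$ is non-decreasing for all $v\in V$, i.e., $f(v,\ell)\le f(v,\ell')$ for $\ell\le\ell'$, then the minimum eccentricity selection procedure described below returns a node $u$ such that $f(u,e(u))$ is minimal over all nodes, and updates the lower certificate $L$ so that $e_L(u)=e(u)$ and $f(v,e_L(v))\ge f(u,e(u))$ for all $v\in V$. Moreover, $k$ successive computations of a node minimizing $f(u,e(u))$ with this procedure use $k+2|L'|$ one-to-all distance queries and $(k+2|L'|)n$ evaluations of $f$, where $L'\subseteq \{\mathrm{antipode}_r(v): v\in V\}$ denotes the set of nodes added to $L$.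
   Context: For nodes $u,v$, $d(u,v)$ is the shortest-path distance and $e(u)=\max_{v\in V} d(u,v)$ is the eccentricity of $u$. Given a ranking $r$ of the nodes, the antipode $\mathrm{antipode}_r(u)$ of $u$ is its furthest node of highest rank, i.e., $\mathrm{antipode}_r(u)=\arg\max_{v\in V}(d(u,v),r(v))$ with pairs compared lexicographically. A one-to-all distance query from $u$ (e.g., a BFS) returns $d(u,v)$ for all $v\in V$, from which $e(u)$ and $\mathrm{antipode}_r(u)$ are obtained. For a set $L$ of nodes (a lower certificate), $e_L(v)=\max_{x\in L} d(v,x)$ (equal to $0$ when $L=\emptyset$), so that $e_L(v)\le e(v)$. The minimum eccentricity selection procedure for $f$ maintains a set $L$ (initially empty) together with the values $e_L(v)$ for all $v\in V$, and, when called, repeats the following: pick $u=\arg\min_{v\in V} f(v,e_L(v))$; perform a one-to-all distance query from $u$ to obtain $e(u)$; if $e_L(u)=e(u)$, return $u$; otherwise let $a=\mathrm{antipode}_r(u)$, perform a one-to-all distance query from $a$, add $a$ to $L$, and update $e_L(v):=\max(e_L(v),d(a,v))$ for all $v\in V$. *)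

(* Defs.v *)
From mathcomp Require Import all_boot all_order.
Set Implicit Arguments. Unset Strict Implicit. Unset Printing Implicit Defensive.
Import Order.TTheory.
Open Scope order_scope.

Section MinEcc.
Variable T : finType.
Variable adj : rel T.

(* d(u,v): the least k such that there is a walk with k edges from u to v.
   (Searched among k < #|T|; in a connected graph every shortest path has
   fewer than #|T| edges.) *)
Definition dist (u v : T) : nat :=
  find (fun k => [exists p : k.-tuple T, path adj u p && (last u p == v)])
       (iota 0 #|T|).

Definition ecc (u : T) : nat := \max_(v : T) dist u v.

Definition eL (L : {set T}) (v : T) : nat := \max_(x in L) dist v x.

Variable r : T -> nat.
Definition antipode (u : T) : T :=
  [arg max_(v > u) ((dist u v, r v) : nat *l nat)].

Variable disp : Order.disp_t.
Variable R : orderType disp.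
Variable f : T -> nat -> R.

Definition is_argmin (L : {set T}) (u : T) : Prop :=
  forall v, f u (eL L u) <= f v (eL L v).

(* One call of the minimum eccentricity selection procedure, started with
   the lower certificate L.  [select_run L u L' q ev] means: the call may
   (for some tie-breaking of the argmin) return u, leaving the certificate
   L', having performed q one-to-all distance queries and ev evaluations
   of f (each argmin computation evaluates f at all #|T| nodes). *)
Inductive select_run : {set T} -> T -> {set T} -> nat -> nat -> Prop :=
| run_return L u :
    is_argmin L u -> eL L u = ecc u ->
    select_run L u L 1 #|T|
| run_step L u u' L' q ev :
    is_argmin L u -> eL L u <> ecc u ->
    select_run (antipode u |: L) u' L' q ev ->
    select_run L u' L' (q + 2) (ev + #|T|).

Inductive select_runs : nat -> {set T} -> {set T} -> nat -> nat -> Prop :=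
| runs0 L : select_runs 0 L L 0 0
| runsS k L L1 L2 u q1 ev1 q2 ev2 :
    select_run L u L1 q1 ev1 ->
    select_runs k L1 L2 q2 ev2 ->
    select_runs k.+1 L L2 (q1 + q2) (ev1 + ev2).

End MinEcc.

(* Main.v *)
Require Import Defs.
From mathcomp Require Import all_boot all_order zify.
Import Order.TTheory.
Open Scope order_scope.
Import Order.TTheory.
Open Scope order_scope.

Set Implicit Arguments.
Section S.
Variables (T : finType) (adj : rel T) (r : T -> nat)
    (disp : Order.disp_t) (R : orderType disp) (f : T -> nat -> R).

Lemma antipode_max u v : (dist adj v u <= dist adj (antipode adj r u) u)%N.
Abort.

Lemma antipode_max u v : (dist adj u v <= dist adj u (antipode adj r u))%N.
Proof.
rewrite /antipode; case: arg_maxP => // a _ H.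
by case/andP: (H v isT).
Qed.

Lemma eL_le_ecc L v : (eL adj L v <= ecc adj v)%N.
Proof.
rewrite /eL /ecc; apply/bigmax_leqP => x _; exact: leq_bigmax.
Qed.

Lemma ecc_antipode u : ecc adj u = dist adj u (antipode adj r u).
Proof.
apply/eqP; rewrite eqn_leq; apply/andP; split.
  apply/bigmax_leqP => v _; exact: antipode_max.
exact: leq_bigmax.
Qed.

Lemma antipode_notin L u : eL adj L u <> ecc adj u -> antipode adj r u \notin L.
Proof.
move=> Hne; apply/negP => Ha; apply: Hne; apply/eqP; rewrite eqn_leq eL_le_ecc /=.
rewrite ecc_antipode /eL; exact: (leq_bigmax_cond _ Ha).
Qed.

Lemma run_cost L u L1 q ev : select_run adj r f L u L1 q ev ->
  [/\ L \subset L1, q + 2 * #|L| = 1 + 2 * #|L1|,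
      ev + #|L| * #|T| = (1 + #|L1|) * #|T| &
      L1 :\: L \subset [set antipode adj r v | v in T]]%N.
Proof.
elim=> {L u L1 q ev} [L u _ _|L u u' L' q ev _ Hne _ [IH1 IH2 IH3 IH4]].
  by split => //; rewrite setDv sub0set.
have Hn : antipode adj r u \notin L by apply: antipode_notin.
have Hc : #|antipode adj r u |: L| = #|L|.+1 by rewrite cardsU1 Hn.
rewrite Hc in IH2 IH3.
split.
- by apply: subset_trans IH1; apply: subsetUr.
- lia.
- rewrite mulSn in IH3. lia.
- apply/subsetP => x; rewrite inE => /andP [xL xL'].
  case: (boolP (x == antipode adj r u)) => [/eqP -> | xa].
    by apply/imsetP; exists u.
  apply: (subsetP IH4); rewrite !inE xL' andbT negb_or xa xL /=.
  done.
Qed.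

Lemma runs_cost k L L2 q ev : select_runs adj r f k L L2 q ev ->
  L \subset [set antipode adj r v | v in T] ->
  [/\ q + 2 * #|L| = k + 2 * #|L2|,
      ev + #|L| * #|T| = (k + #|L2|) * #|T| &
      L2 \subset [set antipode adj r v | v in T]]%N.
Proof.
elim=> {k L L2 q ev} [L|k L L1 L2 u q1 ev1 q2 ev2 Hr _ IH] HA.
  by split.
case: (run_cost Hr) => S1 E1 F1 D1.
have HA1 : L1 \subset [set antipode adj r v | v in T].
  apply/subsetP => x xL1; case: (boolP (x \in L)) => xL.
    exact: (subsetP HA).
  by apply: (subsetP D1); rewrite inE xL.
case: (IH HA1) => E2 F2 D2; split => //.
- lia.
- rewrite mulnDl in F1 F2 *. rewrite mulnDl. lia.
Qed.
End S.

Theorem proposition1 (T : finType) (adj : rel T) (r : T -> nat)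
    (disp : Order.disp_t) (R : orderType disp) (f : T -> nat -> R) :
  (* G is a (nonempty) connected simple undirected graph *)
  symmetric adj -> irreflexive adj -> (0 < #|T|)%N ->
  (forall u v : T, connect adj u v) ->
  (* r is a ranking of the nodes *)
  injective r ->
  (* f(v, .) is non-decreasing on its domain l <= e(v) *)
  (forall (v : T) (l l' : nat), (l <= l' <= ecc adj v)%N ->
      f v l <= f v l') ->
  (* the procedure terminates (returns) from any lower certificate L *)
  (forall L : {set T}, exists u L' q ev, select_run adj r f L u L' q ev) /\
  (* correctness of any run *)
  (forall (L : {set T}) (u : T) (L' : {set T}) (q ev : nat),
      select_run adj r f L u L' q ev ->
      (forall v, f u (ecc adj u) <= f v (ecc adj v)) /\
      eL adj L' u = ecc adj u /\
      (forall v, f u (ecc adj u) <= f v (eL adj L' v))) /\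
  (* cost of k successive calls starting from the empty certificate *)
  (forall (k : nat) (L' : {set T}) (q ev : nat),
      select_runs adj r f k set0 L' q ev ->
      [/\ q = (k + 2 * #|L'|)%N,
          (ev <= (k + 2 * #|L'|) * #|T|)%N &
          L' \subset [set antipode adj r v | v in T]]).
Proof.
move=> _ _ T0 _ _ Hmono.
split; [|split].
- case/card_gt0P: T0 => x0 _.
  move=> L; have [n] := ubnP #|~: L|; elim: n L => // n IH L Hn.
  set u := [arg min_(v < x0) f v (eL adj L v)].
  have Hu : is_argmin adj f L u by rewrite /u; case: arg_minP => // a _ H v; exact: H.
  case: (eqVneq (eL adj L u) (ecc adj u)) => [He|Hne].
    by exists u, L, 1%N, #|T|; exact: run_return.
  have Hn' : antipode adj r u \notin L by apply: antipode_notin; apply/eqP.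
  have Hlt : #|~: (antipode adj r u |: L)| < n.
    rewrite setCU.
    have : #|~: [set antipode adj r u] :&: ~: L| < #|~: L|.
      rewrite -(cardsID [set antipode adj r u] (~: L)) setIC -setDE.
      rewrite (_ : ~: L :&: [set antipode adj r u] = [set antipode adj r u]).
        by rewrite cards1; lia.
      by apply/setIidPr; rewrite sub1set inE.
    lia.
  have [u' [L' [q [ev Hr]]]] := IH (antipode adj r u |: L) Hlt.
  exists u', L', (q + 2)%N, (ev + #|T|)%N.
  by apply: run_step Hu _ Hr; apply/eqP.
- move=> L u L' q ev; elim=> {L u L' q ev} [L u Hu He|L u u' L' q ev _ _ _ IH] //.
  have Hle v : f v (eL adj L v) <= f v (ecc adj v).
    by apply: Hmono; rewrite leqnn eL_le_ecc.
  split; last split => // v; rewrite -He.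
    move=> v; apply: le_trans (Hle v); exact: Hu.
  exact: Hu.
- move=> k L' q ev Hr.
  have [] := runs_cost Hr (sub0set _).
  rewrite cards0 !muln0 !addn0 => -> -> ->; split => //.
  by apply: leq_mul => //; lia.
Qed.
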